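(* Let $q=p^h$ with $p$ prime and $h\geq 1$, let $n\ge 2$ and let $k$ be an integer with $n/2\leq k\leq n-1$. Then \[\mathrm{C}_k(n,q)\setminus \mathrm{C}_{n-k}(n,q)^\perp=\mathrm{C}_k(n,q)\setminus \mathrm{C}_k(n,q)^\perp.\]
   Context: $\mathrm{PG}(n,q)$ is the $n$-dimensional projective space over $\mathbb{F}_q$, $q=p^h$; $\theta_n=(q^{n+1}-1)/(q-1)$. For $1\le j\le n-1$, $\mathrm{C}_j(n,q)$ is the $p$-ary linear code (a subspace of $\mathbb{F}_p^{\theta_n}$, coordinates indexed by the points of $\mathrm{PG}(n,q)$) spanned over $\mathbb{F}_p$ by the incidence vectors of the $j$-dimensional subspaces of $\mathrm{PG}(n,q)$, and $\mathrm{C}_j(n,q)^\perp$ is its dual with respect to the standard scalar product over $\mathbb{F}_p$. *)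

(* Defs.v *)
From HB Require Import structures.
From mathcomp Require Import all_boot all_order all_algebra.
Set Implicit Arguments. Unset Strict Implicit. Unset Printing Implicit Defensive.
Import GRing.Theory.
Local Open Scope ring_scope.

(* Points of PG(n,F): 1-dimensional subspaces of F^(n+1), represented
   canonically by their (unique) generating matrix <<v>>%MS of rank 1. *)
Definition PGpoint (F : finFieldType) (n : nat) : predArgType :=
  {A : 'M[F]_(n.+1) | (\rank A == 1%N) && (<<A>>%MS == A)}.

Notation pword p F n := {ffun PGpoint F n -> 'F_p}.

(* incidence vector of the projective j-subspace spanned by the rows of
   A : 'M_(j+1, n+1) (a j-dimensional subspace when \rank A = j+1) *)
Definition incvec (p : nat) (F : finFieldType) (n j : nat)
  (A : 'M[F]_(j.+1, n.+1)) : pword p F n :=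
  [ffun P : PGpoint F n => ((val P <= A)%MS)%:R].

Definition inCode (p : nat) (F : finFieldType) (n j : nat) (c : pword p F n) : Prop :=
  exists lam : {ffun 'M[F]_(j.+1, n.+1) -> 'F_p},
    forall P : PGpoint F n,
      c P = \sum_(A : 'M[F]_(j.+1, n.+1) | \rank A == j.+1) lam A * incvec p A P.

Definition pdot (p : nat) (F : finFieldType) (n : nat) (c d : pword p F n) : 'F_p :=
  \sum_(P : PGpoint F n) c P * d P.

Definition inDual (p : nat) (F : finFieldType) (n j : nat) (c : pword p F n) : Prop :=
  forall d : pword p F n, inCode j d -> pdot c d = 0.

(* Main.v *)
Require Import Defs.
From HB Require Import structures.
From mathcomp Require Import all_boot all_order all_algebra.
Set Implicit Arguments. Unset Strict Implicit. Unset Printing Implicit Defensive.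
Import GRing.Theory.
Local Open Scope ring_scope.

Lemma card_subrV (F : finFieldType) n m (S : 'M[F]_(m, n)) :
  #|[set v : 'rV[F]_n | (v <= S)%MS]| = (#|F| ^ \rank S)%N.
Proof.
have inj := row_free_inj (m:=1) (row_base_free S).
rewrite -[[set v | _]](_ : [set w *m row_base S | w in [set: 'rV[F]_(\rank S)]] = _).
  by rewrite card_imset // cardsT card_mx mul1n.
apply/setP=> v; rewrite inE; apply/imsetP/idP.
- case=> w _ ->; rewrite -(eq_row_base S); exact: submxMl.
- rewrite -(eq_row_base S) => /submxP [w ->]; by exists w.
Qed.

Lemma card_nz_sub (F : finFieldType) n m (S : 'M[F]_(m, n)) :
  #|[set v : 'rV[F]_n | (v <= S)%MS && (v != 0)]| = (#|F| ^ \rank S).-1.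
Proof.
rewrite -card_subrV (cardsD1 (0 : 'rV[F]_n) [set v : 'rV[F]_n | (v <= S)%MS]) inE sub0mx /=.
have -> : [set v : 'rV[F]_n | (v <= S)%MS] :\ 0 = [set v : 'rV[F]_n | (v <= S)%MS && (v != 0)].
  by apply/setP=> v; rewrite !inE andbC.
by [].
Qed.

Lemma pt_gen (F : finFieldType) n (P : PGpoint F n) (v : 'rV[F]_n.+1) :
  (v <= val P)%MS && (v != 0) = (<<v>>%MS == val P).
Proof.
case: P => A /= /andP[/eqP rA /eqP gA].
apply/idP/idP.
- case/andP=> vA nz; apply/eqP; rewrite -gA; apply/genmxP.
  by rewrite -(mxrank_leqif_eq vA) rA rank_rV nz.
- move/eqP=> eA; subst A; rewrite genmxE submx_refl /=.
  by rewrite -mxrank_eq0 -(genmxE v) rA.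
Qed.

Lemma pt_gen' (F : finFieldType) n (P : PGpoint F n) (v : 'rV[F]_n.+1) :
  v != 0 -> (v <= val P)%MS = (<<v>>%MS == val P).
Proof. by move=> nz; rewrite -pt_gen nz andbT. Qed.

Lemma card_sum (T : finType) (b : pred T) : #|[set x | b x]| = (\sum_x (b x : nat))%N.
Proof.
by rewrite -sum1_card big_mkcond; apply: eq_bigr => x _; rewrite inE; case: (b x).
Qed.

Lemma count_points (F : finFieldType) n m (S : 'M[F]_(m, n.+1)) :
  ((#|F|).-1 * #|[set P : PGpoint F n | (val P <= S)%MS]|)%N = (#|F| ^ \rank S).-1.
Proof.
rewrite -card_nz_sub.
have cP : forall P : PGpoint F n,
    #|[set v : 'rV[F]_n.+1 | (v <= val P)%MS && (v != 0)]| = #|F|.-1.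
  by move=> P; rewrite card_nz_sub; case: P => A /andP[/eqP -> _]; rewrite expn1.
rewrite mulnC -sum_nat_const -(eq_bigr _ (fun P _ => cP P)).
rewrite card_sum (eq_bigr (fun P : PGpoint F n => (\sum_(v : 'rV[F]_n.+1) (((v <= val P)%MS && (v != 0%R)) : nat))%N));
  last by move=> P _; rewrite card_sum.
rewrite exchange_big /=; apply: eq_bigr => v _; rewrite big_mkcond /=.
case: (eqVneq v 0) => [->|nz].
  by rewrite andbF big1 // => P _; rewrite andbF; case: ifP.
have pf : (\rank <<v>>%MS == 1%N) && (<<<<v>>>>%MS == <<v>>%MS).
  by rewrite genmx_id eqxx andbT genmxE rank_rV nz.
pose P0 : PGpoint F n := exist _ <<v>>%MS pf.
rewrite (bigD1 P0) //= big1 ?addn0.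
  by rewrite inE /= genmxE andbT genmxE submx_refl; case: ifP.
move=> P nP; rewrite andbT; move: (pt_gen' P nz) => /= ->; case: ifP => // _.
case: eqP => // e; case/eqP: nP; apply: val_inj; by rewrite /= -e.
Qed.

From mathcomp Require Import zify.

Lemma points_Fp p h (F : finFieldType) n m (S : 'M[F]_(m, n.+1)) :
  prime p -> (0 < h)%N -> #|F| = (p ^ h)%N -> (0 < \rank S)%N ->
  ((#|[set P : PGpoint F n | (val P <= S)%MS]|)%:R : 'F_p) = 1.
Proof.
move=> pp hh hq rS.
have E := count_points S.
set N := #|_| in E *.
have q0 : (#|F|%:R : 'F_p) = 0 by rewrite hq natrX pchar_Fp_0 // expr0n eqn0Ngt hh.
have q1 : (0 < #|F|)%N by rewrite hq expn_gt0 prime_gt0.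
have qm : ((#|F|).-1%:R : 'F_p) = -1.
  by apply: (addIr 1); rewrite addNr -mulrSr prednK // q0.
have : ((((#|F|).-1 * N).+1)%:R : 'F_p) = 0.
  by rewrite E prednK ?expn_gt0 ?q1 // natrX q0 expr0n eqn0Ngt rS.
rewrite mulrSr natrM qm mulN1r addrC => /eqP; rewrite subr_eq0 => /eqP <-.
by [].
Qed.

Lemma inc_dot p h (F : finFieldType) n j1 j2 (A : 'M[F]_(j1.+1, n.+1))
  (B : 'M[F]_(j2.+1, n.+1)) :
  prime p -> (0 < h)%N -> #|F| = (p ^ h)%N ->
  \rank A = j1.+1 -> \rank B = j2.+1 -> (n <= j1 + j2)%N ->
  \sum_(P : PGpoint F n) incvec p A P * incvec p B P = 1.
Proof.
move=> pp hh hq rA rB hn.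
rewrite -(points_Fp (S := (A :&: B)%MS) pp hh hq).
  rewrite card_sum natr_sum; apply: eq_bigr => P _.
  by rewrite !ffunE -natrM mulnb sub_capmx.
have := mxrank_sum_cap A B; have := rank_leq_col (A + B)%MS.
rewrite rA rB; lia.
Qed.

Lemma pdot_comb p h (F : finFieldType) n k j (c d : pword p F n)
  (lam : 'M[F]_(k.+1, n.+1) -> 'F_p) (mu : 'M[F]_(j.+1, n.+1) -> 'F_p) :
  prime p -> (0 < h)%N -> #|F| = (p ^ h)%N -> (n <= k + j)%N ->
  (forall P, c P = \sum_(A : 'M[F]_(k.+1, n.+1) | \rank A == k.+1) lam A * incvec p A P) ->
  (forall P, d P = \sum_(B : 'M[F]_(j.+1, n.+1) | \rank B == j.+1) mu B * incvec p B P) ->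
  pdot c d = (\sum_(A : 'M[F]_(k.+1, n.+1) | \rank A == k.+1) lam A) *
             (\sum_(B : 'M[F]_(j.+1, n.+1) | \rank B == j.+1) mu B).
Proof.
move=> pp hh hq hn hc hd.
rewrite /pdot (eq_bigr (fun P => \sum_(A : 'M[F]_(k.+1, n.+1) | \rank A == k.+1)
   \sum_(B : 'M[F]_(j.+1, n.+1) | \rank B == j.+1)
     lam A * mu B * (incvec p A P * incvec p B P))); last first.
  move=> P _; rewrite hc hd mulr_suml; apply: eq_bigr => A _.
  by rewrite mulr_sumr; apply: eq_bigr => B _; rewrite mulrACA.
rewrite exchange_big /= mulr_suml; apply: eq_bigr => A /eqP rA.
rewrite exchange_big /= mulr_sumr; apply: eq_bigr => B /eqP rB.
by rewrite -mulr_sumr (inc_dot pp hh hq rA rB hn) mulr1.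
Qed.

Lemma dual_iff p h (F : finFieldType) n k j (c : pword p F n)
  (lam : 'M[F]_(k.+1, n.+1) -> 'F_p) :
  prime p -> (0 < h)%N -> #|F| = (p ^ h)%N -> (j <= n)%N -> (n <= k + j)%N ->
  (forall P, c P = \sum_(A : 'M[F]_(k.+1, n.+1) | \rank A == k.+1) lam A * incvec p A P) ->
  inDual j c <-> \sum_(A : 'M[F]_(k.+1, n.+1) | \rank A == k.+1) lam A = 0.
Proof.
move=> pp hh hq hj hn hc; split; last first.
  move=> s0 d [mu hd]; by rewrite (pdot_comb pp hh hq hn hc hd) s0 mul0r.
move=> hD.
pose B : 'M[F]_(j.+1, n.+1) := pid_mx j.+1.
have rB : \rank B = j.+1 by rewrite rank_pid_mx.
pose mu := [ffun A : 'M[F]_(j.+1, n.+1) => ((A == B) : nat)%:R : 'F_p].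
have hd : forall P, incvec p B P =
   \sum_(A : 'M[F]_(j.+1, n.+1) | \rank A == j.+1) mu A * incvec p A P.
  move=> P; rewrite (bigD1 B) ?rB //= /mu !ffunE eqxx mul1r big1 ?addr0 //.
  by move=> A /andP[_ nAB]; rewrite /mu ffunE (negbTE nAB) mul0r.
have := hD _ (ex_intro _ mu hd).
have s1 : \sum_(A : 'M[F]_(j.+1, n.+1) | \rank A == j.+1) mu A = 1.
  rewrite (bigD1 B) ?rB //= /mu ffunE eqxx big1 ?addr0 //.
  by move=> A /andP[_ nAB]; rewrite ffunE (negbTE nAB).
by rewrite (pdot_comb pp hh hq hn hc hd) s1 mulr1.
Qed.

Theorem mainTheorem6 (p h : nat) (F : finFieldType) (n k : nat)
  (hp : prime p) (hh : (0 < h)%N) (hq : #|F| = (p ^ h)%N)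
  (hn : (2 <= n)%N) (hk1 : (n <= k.*2)%N) (hk2 : (k <= n - 1)%N) :
  forall c : pword p F n,
    (inCode k c /\ ~ inDual (n - k) c) <-> (inCode k c /\ ~ inDual k c).
Proof.
move=> c.
have E : forall lam : {ffun 'M[F]_(k.+1, n.+1) -> 'F_p},
  (forall P, c P = \sum_(A : 'M[F]_(k.+1, n.+1) | \rank A == k.+1) lam A * incvec p A P) ->
  (inDual (n - k) c <-> inDual k c).
  move=> lam hc.
  rewrite (dual_iff (j := n - k) hp hh hq _ _ hc); try lia.
  rewrite (dual_iff (j := k) hp hh hq _ _ hc); try lia.
  by [].
split; case=> [[lam hc] nd]; split; try by exists lam.
- by rewrite -(E lam hc).
- by rewrite (E lam hc).
Qed.
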